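(* Let $0<\epsilon<1$ and $\mathcal Q=[1/\epsilon]$. Let $0<\alpha<1$ be irrational and let $\gamma=p/q<\gamma'=p'/q'$ be the two consecutive elements of $\mathcal F_{\mathcal Q}$ with $\gamma<\alpha<\gamma'$. Then: (i) if $\frac pq<\alpha<\frac{p'-\epsilon}{q'}$, then $q_{N(\alpha,\epsilon)}(\alpha)=q$ and $d_{N(\alpha,\epsilon)}(\alpha)=q\alpha-p$; (ii) if $\frac{p'-\epsilon}{q'}\le\alpha\le\frac{p+\epsilon}{q}$, then $q_{N(\alpha,\epsilon)}(\alpha)=\min(q,q')$, and $d_{N(\alpha,\epsilon)}(\alpha)=q\alpha-p$ if $q<q'$, $d_{N(\alpha,\epsilon)}(\alpha)=p'-q'\alpha$ if $q'<q$; (iii) if $\frac{p+\epsilon}{q}<\alpha<\frac{p'}{q'}$, then $q_{N(\alpha,\epsilon)}(\alpha)=q'$ and $d_{N(\alpha,\epsilon)}(\alpha)=p'-q'\alpha$.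
   Context: $\mathcal F_{\mathcal Q}=\{p/q:1\le p\le q\le\mathcal Q,\ \gcd(p,q)=1\}$ is the set of Farey fractions of order $\le\mathcal Q$. For irrational $\alpha\in(0,1)$ with continued fraction partial quotients $a_1,a_2,\dots$ (i.e. $a_n=[1/T^{n-1}\alpha]$, $T(x)=1/x-[1/x]$), define $p_0=1,p_1=0$, $q_0=0,q_1=1$, $p_{n+1}=a_np_n+p_{n-1}$, $q_{n+1}=a_nq_n+q_{n-1}$, $d_n(\alpha)=|q_n\alpha-p_n|$, and $N(\alpha,\epsilon)=\inf\{n\ge0:d_n(\alpha)\le\epsilon\}$. *)

(* Defs.v *)
From Stdlib Require Import Reals ZArith Arith.
Open Scope R_scope.

Definition gaussT (x : R) : R := / x - IZR (Int_part (/ x)).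

Fixpoint iterT (n : nat) (x : R) : R :=
  match n with O => x | S k => gaussT (iterT k x) end.

(* partial quotient a_n = [1 / T^{n-1} alpha], for n >= 1 *)
Definition cf_a (alpha : R) (n : nat) : Z := Int_part (/ iterT (n - 1) alpha).

(* cf_pq alpha n = ((p_n, q_n), (p_{n+1}, q_{n+1})) with
   p_0 = 1, p_1 = 0, q_0 = 0, q_1 = 1,
   p_{n+1} = a_n p_n + p_{n-1}, q_{n+1} = a_n q_n + q_{n-1}. *)
Fixpoint cf_pq (alpha : R) (n : nat) : (Z * Z) * (Z * Z) :=
  match n with
  | O => ((1%Z, 0%Z), (0%Z, 1%Z))
  | S k =>
      let '((pk, qk), (pk1, qk1)) := cf_pq alpha k in
      let a := cf_a alpha (S k) in
      ((pk1, qk1), ((a * pk1 + pk)%Z, (a * qk1 + qk)%Z))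
  end.

Definition cf_p (alpha : R) (n : nat) : Z := fst (fst (cf_pq alpha n)).
Definition cf_q (alpha : R) (n : nat) : Z := snd (fst (cf_pq alpha n)).

Definition cf_d (alpha : R) (n : nat) : R :=
  Rabs (IZR (cf_q alpha n) * alpha - IZR (cf_p alpha n)).

Definition is_N (alpha eps : R) (n : nat) : Prop :=
  cf_d alpha n <= eps /\ (forall m : nat, (m < n)%nat -> eps < cf_d alpha m).

Definition in_Farey (Q : nat) (x : R) : Prop :=
  exists a b : nat, (1 <= a)%nat /\ (a <= b)%nat /\ (b <= Q)%nat /\
    Nat.gcd a b = 1%nat /\ x = INR a / INR b.

Definition irrational (x : R) : Prop :=
  ~ (exists a b : Z, b <> 0%Z /\ x = IZR a / IZR b).

(* Main.v *)
Require Import Defs.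
From Stdlib Require Import Reals ZArith Arith Lia Lra Psatz Classical.
Open Scope R_scope.

Lemma Int_part_ge1 r : 1 < r -> (1 <= Int_part r)%Z.
Proof.
  intros H. destruct (base_Int_part r) as [H1 H2].
  assert (0 < IZR (Int_part r)) by lra. apply lt_IZR in H0. lia.
Qed.

Lemma gaussT_props x : 0 < x < 1 -> irrational x ->
  0 < gaussT x < 1 /\ irrational (gaussT x).
Proof.
  intros Hx Hi. unfold gaussT.
  destruct (base_Int_part (/x)) as [H1 H2].
  set (k := Int_part (/x)) in *.
  assert (Hne : / x - IZR k <> 0).
  { intro E. apply Hi. exists 1%Z, k.
    assert (/x = IZR k) by lra.
    assert (IZR k <> 0) by (rewrite <- H; apply Rinv_neq_0_compat; lra).
    split. { intro Hk; apply H0; rewrite Hk; reflexivity. }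
    rewrite <- H. field. lra. }
  split. split; lra.
  intros [a [b [Hb E]]]. apply Hi.
  exists b, (a + k * b)%Z. 
  assert (Hb' : IZR b <> 0) by (apply not_0_IZR; auto).
  assert (E2 : / x = (IZR a + IZR k * IZR b) / IZR b).
  { replace (/x) with (IZR a / IZR b + IZR k) by lra. field; auto. }
  assert (Hs : IZR a + IZR k * IZR b <> 0).
  { intro Z0. rewrite Z0 in E2. unfold Rdiv in E2. rewrite Rmult_0_l in E2.
    apply (Rinv_neq_0_compat x); lra. }
  split. { intro Z0. apply Hs. rewrite <- mult_IZR, <- plus_IZR, Z0. reflexivity. }
  rewrite plus_IZR, mult_IZR.
  replace x with (/ / x) by (field; lra). rewrite E2. field. split; auto.
Qed.

Lemma iterT_props alpha n : 0 < alpha < 1 -> irrational alpha ->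
  0 < iterT n alpha < 1 /\ irrational (iterT n alpha).
Proof.
  intros H Hi. induction n as [|n IH]; simpl; auto.
  destruct IH. apply gaussT_props; auto.
Qed.

Lemma cf_pq_S alpha n : cf_pq alpha (S n) =
  (snd (cf_pq alpha n),
   ((cf_a alpha (S n) * fst (snd (cf_pq alpha n)) + fst (fst (cf_pq alpha n)))%Z,
    (cf_a alpha (S n) * snd (snd (cf_pq alpha n)) + snd (fst (cf_pq alpha n)))%Z)).
Proof. simpl. destruct (cf_pq alpha n) as [[x y] [z w]]. reflexivity. Qed.

Lemma cf_p_SS alpha n : cf_p alpha (S (S n)) =
  (cf_a alpha (S n) * cf_p alpha (S n) + cf_p alpha n)%Z.
Proof. unfold cf_p. simpl. destruct (cf_pq alpha n) as [[x y] [z w]]. reflexivity. Qed.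

Lemma cf_q_SS alpha n : cf_q alpha (S (S n)) =
  (cf_a alpha (S n) * cf_q alpha (S n) + cf_q alpha n)%Z.
Proof. unfold cf_q. simpl. destruct (cf_pq alpha n) as [[x y] [z w]]. reflexivity. Qed.

Definition cf_e alpha n := IZR (cf_q alpha n) * alpha - IZR (cf_p alpha n).

Lemma cf_a_S alpha n : cf_a alpha (S n) = Int_part (/ iterT n alpha).
Proof. unfold cf_a. f_equal. f_equal. f_equal. lia. Qed.

Lemma cf_e_S alpha n : 0 < alpha < 1 -> irrational alpha ->
  cf_e alpha (S n) = - cf_e alpha n * iterT n alpha.
Proof.
  intros H Hi. induction n as [|n IH].
  - unfold cf_e. simpl. unfold cf_q, cf_p; simpl. lra.
  - unfold cf_e in *. rewrite cf_p_SS, cf_q_SS, cf_a_S.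
    rewrite plus_IZR, plus_IZR, !mult_IZR.
    destruct (iterT_props alpha n H Hi) as [Ht _].
    simpl iterT. unfold gaussT.
    set (A := IZR (Int_part (/ iterT n alpha))) in *.
    set (t := iterT n alpha) in *.
    assert (E : IZR (cf_q alpha n) * alpha - IZR (cf_p alpha n) =
      - (IZR (cf_q alpha (S n)) * alpha - IZR (cf_p alpha (S n))) / t).
    { rewrite IH. field. lra. }
    transitivity (A * (IZR (cf_q alpha (S n)) * alpha - IZR (cf_p alpha (S n))) +
       (IZR (cf_q alpha n) * alpha - IZR (cf_p alpha n))); [ring|].
    rewrite E. field. lra.
Qed.

Lemma cf_q_pos alpha n : 0 < alpha < 1 -> irrational alpha ->
  (0 <= cf_q alpha n /\ 1 <= cf_q alpha (S n))%Z.
Proof.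
  intros H Hi. induction n as [|n IH].
  - unfold cf_q; simpl. lia.
  - destruct IH as [IH1 IH2]. split. lia. rewrite cf_q_SS, cf_a_S.
    destruct (iterT_props alpha n H Hi) as [Ht _].
    assert (1 <= Int_part (/ iterT n alpha))%Z.
    { apply Int_part_ge1. rewrite <- Rinv_1. apply Rinv_lt_contravar; lra. }
    nia.
Qed.

Lemma cf_det alpha n :
  let D := (cf_p alpha (S n) * cf_q alpha n - cf_p alpha n * cf_q alpha (S n))%Z in
  (D * D = 1)%Z.
Proof.
  induction n as [|n IH]; simpl.
  - unfold cf_q, cf_p; simpl. lia.
  - rewrite cf_p_SS, cf_q_SS.
    replace ((cf_a alpha (S n) * cf_p alpha (S n) + cf_p alpha n) * cf_q alpha (S n) -
   cf_p alpha (S n) * (cf_a alpha (S n) * cf_q alpha (S n) + cf_q alpha n))%Z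
    with (- (cf_p alpha (S n) * cf_q alpha n - cf_p alpha n * cf_q alpha (S n)))%Z by ring.
    rewrite Z.mul_opp_opp. exact IH.
Qed.

Lemma cf_d_e alpha n : cf_d alpha n = Rabs (cf_e alpha n).
Proof. reflexivity. Qed.

Lemma cf_d_S alpha n : 0 < alpha < 1 -> irrational alpha ->
  cf_d alpha (S n) = cf_d alpha n * iterT n alpha.
Proof.
  intros H Hi. rewrite !cf_d_e, cf_e_S by auto.
  destruct (iterT_props alpha n H Hi) as [Ht _].
  rewrite Rabs_mult, Rabs_Ropp, (Rabs_right (iterT n alpha)) by lra. reflexivity.
Qed.

Lemma cf_d_0 alpha : cf_d alpha 0 = 1.
Proof. unfold cf_d, cf_q, cf_p; simpl. rewrite Rmult_0_l. unfold Rminus. rewrite Rplus_0_l, Rabs_Ropp, Rabs_R1. reflexivity. Qed.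

Lemma cf_d_pos alpha n : 0 < alpha < 1 -> irrational alpha -> 0 < cf_d alpha n.
Proof.
  intros H Hi. induction n as [|n IH]. rewrite cf_d_0; lra.
  rewrite cf_d_S by auto. destruct (iterT_props alpha n H Hi) as [Ht _].
  apply Rmult_lt_0_compat; lra.
Qed.

Lemma t_prod alpha n : 0 < alpha < 1 -> irrational alpha ->
  iterT n alpha * iterT (S n) alpha <= 1/2.
Proof.
  intros H Hi. destruct (iterT_props alpha n H Hi) as [Ht _].
  destruct (iterT_props alpha (S n) H Hi) as [Ht' _].
  simpl iterT in *. unfold gaussT in *.
  set (t := iterT n alpha) in *.
  assert (1 <= Int_part (/ t))%Z.
  { apply Int_part_ge1. rewrite <- Rinv_1. apply Rinv_lt_contravar; lra. }
  apply IZR_le in H0.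
  assert (E : t * (/ t - IZR (Int_part (/ t))) = 1 - t * IZR (Int_part (/ t))) by (field; lra).
  assert (t * (/ t - IZR (Int_part (/ t))) < t * 1) by (apply Rmult_lt_compat_l; lra).
  destruct (Rle_dec t (1/2)). lra. nra.
Qed.

Lemma decay alpha k : 0 < alpha < 1 -> irrational alpha ->
  cf_d alpha (2 * k) <= (1/2) ^ k.
Proof.
  intros H Hi. induction k as [|k IH]. simpl. rewrite cf_d_0; lra.
  replace (2 * S k)%nat with (S (S (2 * k))) by lia.
  rewrite !cf_d_S by auto. simpl pow.
  pose proof (t_prod alpha (2*k) H Hi).
  pose proof (cf_d_pos alpha (2*k) H Hi).
  destruct (iterT_props alpha (2*k) H Hi) as [Ht _].
  destruct (iterT_props alpha (S (2*k)) H Hi) as [Ht' _].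
  nra.
Qed.

Lemma exists_small alpha eps : 0 < alpha < 1 -> irrational alpha -> 0 < eps ->
  exists n, cf_d alpha n <= eps.
Proof.
  intros H Hi He.
  destruct (pow_lt_1_zero (1/2) ltac:(rewrite Rabs_right; lra) eps He) as [K HK].
  exists (2 * K)%nat. specialize (HK K (le_n _)).
  rewrite Rabs_right in HK. pose proof (decay alpha K H Hi). lra.
  apply Rle_ge, pow_le; lra.
Qed.

Lemma least_nat (P : nat -> Prop) n0 : P n0 ->
  exists N, P N /\ forall m, (m < N)%nat -> ~ P m.
Proof.
  revert n0. induction n0 as [n0 IH] using (well_founded_induction lt_wf).
  intros Hn0. destruct (classic (exists m, (m < n0)%nat /\ P m)) as [[m [Hm Pm]]|Hno].
  - exact (IH m Hm Pm).
  - exists n0. split; auto. intros m Hm Pm. apply Hno. eauto.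
Qed.

Lemma best_approx alpha n (a b : Z) : 0 < alpha < 1 -> irrational alpha ->
  (1 <= n)%nat -> (1 <= b < cf_q alpha (S n))%Z ->
  cf_d alpha n <= Rabs (IZR b * alpha - IZR a).
Proof.
  intros H Hi Hn Hb.
  pose proof (cf_det alpha n) as HD. simpl in HD.
  set (P0 := cf_p alpha n) in *. set (P1 := cf_p alpha (S n)) in *.
  set (Q0 := cf_q alpha n) in *. set (Q1 := cf_q alpha (S n)) in *.
  set (D := (P1 * Q0 - P0 * Q1)%Z) in *.
  assert (HQ0 : (1 <= Q0)%Z).
  { destruct n. lia. apply (cf_q_pos alpha n H Hi). }
  set (x := (- D * (a * Q1 - b * P1))%Z).
  set (y := (- D * (P0 * b - Q0 * a))%Z).
  assert (Ea : a = (x * P0 + y * P1)%Z).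
  { unfold x, y. replace (- D * (a * Q1 - b * P1) * P0 + - D * (P0 * b - Q0 * a) * P1)%Z
      with (D * (D * a))%Z by (unfold D; ring). rewrite Z.mul_assoc, HD. ring. }
  assert (Eb : b = (x * Q0 + y * Q1)%Z).
  { unfold x, y. replace (- D * (a * Q1 - b * P1) * Q0 + - D * (P0 * b - Q0 * a) * Q1)%Z
      with (D * (D * b))%Z by (unfold D; ring). rewrite Z.mul_assoc, HD. ring. }
  assert (Hxy : (1 <= x /\ y <= 0)%Z \/ (x <= -1 /\ 0 <= y)%Z).
  { clearbody x y. destruct (Z.lt_trichotomy y 0) as [Hy|[Hy|Hy]]; subst; nia. }
  assert (E : IZR b * alpha - IZR a = cf_e alpha n * (IZR x - IZR y * iterT n alpha)).
  { rewrite Ea, Eb, !plus_IZR, !mult_IZR.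
    pose proof (cf_e_S alpha n H Hi) as ES. unfold cf_e in ES |- *. fold P0 P1 Q0 Q1 in ES |- *.
    transitivity (IZR x * (IZR Q0 * alpha - IZR P0) + IZR y * (IZR Q1 * alpha - IZR P1)).
    ring. rewrite ES. ring. }
  rewrite E, Rabs_mult, <- cf_d_e.
  destruct (iterT_props alpha n H Hi) as [Ht _].
  pose proof (cf_d_pos alpha n H Hi).
  assert (1 <= Rabs (IZR x - IZR y * iterT n alpha)).
  { destruct Hxy as [[H1 H2]|[H1 H2]]; apply IZR_le in H1; apply IZR_le in H2.
    - rewrite Rabs_right by nra. nra.
    - rewrite Rabs_left1 by nra. nra. }
  nra.
Qed.

Lemma find_bracket alpha (b0 : Z) N : 0 < alpha < 1 -> irrational alpha ->
  (1 <= b0)%Z -> (b0 < cf_q alpha N)%Z ->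
  exists n, (1 <= n < N)%nat /\ (cf_q alpha n <= b0 < cf_q alpha (S n))%Z.
Proof.
  intros H Hi Hb. induction N as [|N IH]; intros HN.
  - unfold cf_q in HN; simpl in HN. lia.
  - destruct (Z_le_gt_dec (cf_q alpha N) b0) as [Hle|Hgt].
    + destruct N. unfold cf_q in HN; simpl in HN. lia.
      exists (S N). split. lia. lia.
    + destruct (IH ltac:(lia)) as [n [H1 H2]]. exists n. split; [lia|auto].
Qed.

Lemma key alpha eps (b0 a0 : Z) : 0 < alpha < 1 -> irrational alpha ->
  0 < eps <= 1/2 -> (1 <= b0)%Z -> Rabs (IZR b0 * alpha - IZR a0) <= eps ->
  (forall b a : Z, (1 <= b < b0)%Z -> eps < Rabs (IZR b * alpha - IZR a)) ->
  exists n, is_N alpha eps n /\ cf_q alpha n = b0 /\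
    cf_d alpha n = Rabs (IZR b0 * alpha - IZR a0).
Proof.
  intros H Hi He Hb0 Ha0 Hmin.
  destruct (exists_small alpha eps H Hi ltac:(lra)) as [n0 Hn0].
  destruct (least_nat (fun n => cf_d alpha n <= eps) n0 Hn0) as [N [HN HNmin]].
  assert (HNpos : (1 <= N)%nat).
  { destruct N. rewrite cf_d_0 in HN. lra. lia. }
  assert (HqN : (1 <= cf_q alpha N)%Z).
  { destruct N. lia. apply (cf_q_pos alpha N H Hi). }
  assert (Eq : cf_q alpha N = b0).
  { destruct (Z.lt_trichotomy (cf_q alpha N) b0) as [Hl|[He'|Hg]]; auto.
    - exfalso. specialize (Hmin _ (cf_p alpha N) (conj HqN Hl)).
      unfold cf_d in HN. lra.
    - exfalso. destruct (find_bracket alpha b0 N H Hi Hb0 Hg) as [n [[Hn1 Hn2] [Hq1 Hq2]]].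
      pose proof (best_approx alpha n a0 b0 H Hi Hn1 (conj Hb0 Hq2)).
      apply (HNmin n Hn2). lra. }
  exists N. split.
  { split; auto. intros m Hm. apply Rnot_le_lt. apply HNmin; auto. }
  split; auto.
  unfold cf_d in *. rewrite Eq in *.
  destruct (Z.eq_dec (cf_p alpha N) a0) as [Ep|Np]. rewrite Ep; reflexivity.
  exfalso. 
  assert (Hd : 1 <= Rabs (IZR (cf_p alpha N) - IZR a0)).
  { rewrite <- minus_IZR. destruct (Z.lt_trichotomy (cf_p alpha N) a0) as [h|[h|h]].
    - rewrite Rabs_left1. rewrite <- opp_IZR. apply IZR_le. lia. apply IZR_le; lia.
    - contradiction.
    - rewrite Rabs_right. apply IZR_le; lia. apply Rle_ge, IZR_le; lia. }
  set (z := IZR b0 * alpha) in *.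
  assert (Habs : Rabs (IZR (cf_p alpha N) - IZR a0) <= Rabs (z - IZR (cf_p alpha N)) + Rabs (z - IZR a0)).
  { replace (IZR (cf_p alpha N) - IZR a0) with (- (z - IZR (cf_p alpha N)) + (z - IZR a0)) by ring.
    eapply Rle_trans. apply Rabs_triang. rewrite Rabs_Ropp. lra. }
  assert (E1 : Rabs (z - IZR a0) = 1/2) by lra.
  apply Hi. 
  destruct (Rcase_abs (z - IZR a0)) as [hl|hr].
  - rewrite Rabs_left in E1 by auto. exists (2 * a0 - 1)%Z, (2 * b0)%Z. split. lia.
    rewrite minus_IZR, !mult_IZR. unfold z in E1.
    assert (IZR b0 <> 0) by (apply not_0_IZR; lia). field_simplify_eq; auto. simpl. nra.
  - rewrite Rabs_right in E1 by auto. exists (2 * a0 + 1)%Z, (2 * b0)%Z. split. lia.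
    rewrite plus_IZR, !mult_IZR. unfold z in E1.
    assert (IZR b0 <> 0) by (apply not_0_IZR; lia). field_simplify_eq; auto. simpl. nra.
Qed.

Lemma div_le (a b : Z) (p q : nat) : (1 <= b)%Z -> (1 <= q)%nat -> Nat.gcd p q = 1%nat ->
  (a * Z.of_nat q = b * Z.of_nat p)%Z -> (Z.of_nat q <= b)%Z.
Proof.
  intros Hb Hq Hg E.
  assert (Ha : (0 <= a)%Z) by nia.
  assert (E' : (Z.to_nat a * q = Z.to_nat b * p)%nat).
  { apply Nat2Z.inj. rewrite !Nat2Z.inj_mul, !Z2Nat.id by lia. exact E. }
  assert (Nat.divide q (p * Z.to_nat b)).
  { exists (Z.to_nat a). lia. }
  apply Nat.gauss in H. 2: { rewrite Nat.gcd_comm; exact Hg. }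
  apply Nat.divide_pos_le in H; lia.
Qed.

Lemma farey_consec (Q p q p' q' : nat) :
 (1 <= p)%nat -> (p <= q)%nat -> (q <= Q)%nat -> Nat.gcd p q = 1%nat ->
 (1 <= p')%nat -> (p' <= q')%nat -> (q' <= Q)%nat -> Nat.gcd p' q' = 1%nat ->
 (p * q' < p' * q)%nat ->
 (forall u v : nat, (1 <= u)%nat -> (u <= v)%nat -> (v <= Q)%nat -> Nat.gcd u v = 1%nat ->
    ~ ((p * v < u * q)%nat /\ (u * q' < p' * v)%nat)) ->
 (p' * q = 1 + p * q')%nat /\ (Q < q + q')%nat.
Proof.
  intros H1 H2 H3 H4 H5 H6 H7 H8 Hlt Hcons.
  assert (Hpq : (p < q)%nat).
  { destruct (Nat.eq_dec p q) as [e|ne]; [|lia]. subst. rewrite Nat.gcd_diag in H4. subst. nia. }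
  destruct (Nat.gcd_bezout_pos q p ltac:(lia)) as [u0 [v0 Hb]].
  rewrite Nat.gcd_comm, H4 in Hb.
  set (r := (v0 mod q)%nat). set (m := (v0 / q)%nat).
  assert (Hv0 : v0 = (q * m + r)%nat) by (apply Nat.div_mod; lia).
  assert (Hr : (r < q)%nat) by (apply Nat.mod_upper_bound; lia).
  set (k := ((Q - r) / q)%nat).
  assert (Hk : (Q - r = q * k + (Q - r) mod q)%nat) by (apply Nat.div_mod; lia).
  assert (Hk2 : ((Q - r) mod q < q)%nat) by (apply Nat.mod_upper_bound; lia).
  set (v := (r + q * k)%nat).
  assert (Hv1 : (v <= Q)%nat) by lia.
  assert (Hv2 : (Q < v + q)%nat) by lia.
  set (uZ := (Z.of_nat u0 - Z.of_nat p * Z.of_nat m + Z.of_nat p * Z.of_nat k)%Z).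
  assert (EZ : (uZ * Z.of_nat q = 1 + Z.of_nat v * Z.of_nat p)%Z).
  { assert (Hb' : (Z.of_nat u0 * Z.of_nat q = 1 + Z.of_nat v0 * Z.of_nat p)%Z) by lia.
    assert (Hv0' : Z.of_nat v0 = (Z.of_nat q * Z.of_nat m + Z.of_nat r)%Z) by lia.
    unfold uZ, v. rewrite Nat2Z.inj_add, Nat2Z.inj_mul.
    rewrite Hv0' in Hb'. nia. }
  assert (HuZ : (0 <= uZ)%Z) by nia.
  set (u := Z.to_nat uZ).
  assert (Eu : (u * q = 1 + v * p)%nat).
  { apply Nat2Z.inj. rewrite Nat2Z.inj_mul, Nat2Z.inj_add, Nat2Z.inj_mul. unfold u. rewrite Z2Nat.id by lia. exact EZ. }
  assert (Hvpos : (1 <= v)%nat) by lia.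
  assert (Hu1 : (1 <= u)%nat) by nia.
  assert (Hu2 : (u <= v)%nat) by nia.
  assert (Hg : Nat.gcd u v = 1%nat).
  { apply Nat.divide_1_r.
    apply (Nat.divide_add_cancel_r _ (v * p)).
    - apply Nat.divide_mul_l. apply Nat.gcd_divide_r.
    - replace (v * p + 1)%nat with (u * q)%nat by lia.
      apply Nat.divide_mul_l. apply Nat.gcd_divide_l. }
  specialize (Hcons u v Hu1 Hu2 Hv1 Hg).
  assert (Hge : (p' * v <= u * q')%nat).
  { destruct (le_lt_dec (p' * v) (u * q')); auto. exfalso. apply Hcons. split; lia. }
  assert (Heq : (u * q' = p' * v)%nat).
  { destruct (Nat.eq_dec (u * q') (p' * v)); auto. exfalso.
    assert (Iden : (Z.of_nat q' = Z.of_nat q * (Z.of_nat u * Z.of_nat q' - Z.of_nat v * Z.of_nat p')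
        + Z.of_nat v * (Z.of_nat p' * Z.of_nat q - Z.of_nat p * Z.of_nat q'))%Z).
    { assert (Eu' : (Z.of_nat u * Z.of_nat q = 1 + Z.of_nat v * Z.of_nat p)%Z) by lia.
      transitivity (Z.of_nat q' * (Z.of_nat u * Z.of_nat q - Z.of_nat v * Z.of_nat p))%Z.
      rewrite Eu'. ring. ring. }
    assert (X1 : (1 <= Z.of_nat u * Z.of_nat q' - Z.of_nat v * Z.of_nat p')%Z) by lia.
    assert (X2 : (1 <= Z.of_nat p' * Z.of_nat q - Z.of_nat p * Z.of_nat q')%Z) by lia.
    nia. }
  assert (Hvq : v = q').
  { apply Nat.divide_antisym.
    - apply (Nat.gauss v u q'). exists p'. lia. rewrite Nat.gcd_comm. exact Hg.
    - apply (Nat.gauss q' p' v). exists u. lia. rewrite Nat.gcd_comm. exact H8. }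
  assert (u = p').
  { apply (Nat.mul_cancel_r _ _ q'). lia. rewrite Hvq in Heq. lia. }
  split. rewrite <- H, Eu, Hvq. lia. rewrite <- Hvq. lia.
Qed.

Lemma frac_lt (a b c d : R) : 0 < b -> 0 < d -> (a / b < c / d <-> a * d < c * b).
Proof.
  intros Hb Hd.
  assert (Ea : a / b = (a * d) * / (b * d)) by (field; lra).
  assert (Ec : c / d = (c * b) * / (b * d)) by (field; lra).
  assert (0 < / (b * d)) by (apply Rinv_0_lt_compat; nra).
  rewrite Ea, Ec. split; intro H'. nra. nra.
Qed.

Lemma div_lt_l (A B c : R) : 0 < c -> (A / c < B <-> A < B * c).
Proof. intros Hc. assert (E : A / c * c = A) by (field; lra). split; intro; nra. Qed.
Lemma div_lt_r (A B c : R) : 0 < c -> (B < A / c <-> B * c < A).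
Proof. intros Hc. assert (E : A / c * c = A) by (field; lra). split; intro; nra. Qed.
Lemma div_le_l (A B c : R) : 0 < c -> (A / c <= B <-> A <= B * c).
Proof. intros Hc. assert (E : A / c * c = A) by (field; lra). split; intro; nra. Qed.
Lemma div_le_r (A B c : R) : 0 < c -> (B <= A / c <-> B * c <= A).
Proof. intros Hc. assert (E : A / c * c = A) by (field; lra). split; intro; nra. Qed.

Theorem lemma5p1 (eps alpha : R) (p q p' q' : nat) :
  0 < eps < 1 ->
  0 < alpha < 1 ->
  irrational alpha ->
  let Q := Z.to_nat (Int_part (/ eps)) in
  (1 <= p)%nat -> (p <= q)%nat -> (q <= Q)%nat -> Nat.gcd p q = 1%nat ->
  (1 <= p')%nat -> (p' <= q')%nat -> (q' <= Q)%nat -> Nat.gcd p' q' = 1%nat ->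
  INR p / INR q < alpha < INR p' / INR q' ->
  (forall x, in_Farey Q x -> ~ (INR p / INR q < x < INR p' / INR q')) ->
  ((alpha < (INR p' - eps) / INR q' ->
    exists n, is_N alpha eps n /\ IZR (cf_q alpha n) = INR q /\
              cf_d alpha n = INR q * alpha - INR p) /\
   ((INR p' - eps) / INR q' <= alpha <= (INR p + eps) / INR q ->
    exists n, is_N alpha eps n /\ IZR (cf_q alpha n) = INR (Nat.min q q') /\
              ((q < q')%nat -> cf_d alpha n = INR q * alpha - INR p) /\
              ((q' < q)%nat -> cf_d alpha n = INR p' - INR q' * alpha)) /\
   ((INR p + eps) / INR q < alpha ->
    exists n, is_N alpha eps n /\ IZR (cf_q alpha n) = INR q' /\
              cf_d alpha n = INR p' - INR q' * alpha)).
Proof.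
  intros Heps Hal Hirr Q Hp Hpq HqQ Hg Hp' Hpq' Hq'Q Hg' [Hlo Hhi] Hcons.
  assert (HQ : INR Q * eps <= 1 < (INR Q + 1) * eps).
  { assert (Hk : (1 <= Int_part (/ eps))%Z).
    { apply Int_part_ge1. rewrite <- Rinv_1. apply Rinv_lt_contravar; lra. }
    assert (E : INR Q = IZR (Int_part (/ eps))).
    { unfold Q. rewrite INR_IZR_INZ, Z2Nat.id by lia. reflexivity. }
    destruct (base_Int_part (/ eps)) as [B1 B2].
    assert (E2 : / eps * eps = 1) by (field; lra).
    rewrite E. split.
    - apply Rmult_le_compat_r with (r := eps) in B1; lra.
    - assert (/ eps < IZR (Int_part (/ eps)) + 1) by lra.
      apply Rmult_lt_compat_r with (r := eps) in H; lra. }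
  assert (Rq : 1 <= INR q) by (apply (le_INR 1); lia).
  assert (Rq' : 1 <= INR q') by (apply (le_INR 1); lia).
  assert (Rp : 1 <= INR p) by (apply (le_INR 1); lia).
  assert (Rp' : 1 <= INR p') by (apply (le_INR 1); lia).
  assert (RqQ : INR q <= INR Q) by (apply le_INR; lia).
  assert (Rq'Q : INR q' <= INR Q) by (apply le_INR; lia).
  assert (Pq : 0 < INR q) by lra. assert (Pq' : 0 < INR q') by lra.
  assert (Hcross : (p * q' < p' * q)%nat).
  { destruct (le_lt_dec (p' * q) (p * q')) as [h|h]; auto. exfalso.
    apply le_INR in h. rewrite !mult_INR in h.
    assert (INR p / INR q < INR p' / INR q') by lra.
    rewrite (frac_lt _ _ _ _ Pq Pq') in H. lra. }
  destruct (farey_consec Q p q p' q' Hp Hpq HqQ Hg Hp' Hpq' Hq'Q Hg' Hcross) as [F1 F2].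
  { intros u v Hu1 Huv HvQ Hguv [A1 A2].
    assert (Hv : (1 <= v)%nat) by lia.
    apply (Hcons (INR u / INR v)).
    - exists u, v. repeat split; auto.
    - assert (0 < INR v) by (apply (lt_INR 0); lia).
      split; [rewrite (frac_lt _ _ _ _ Pq H)|rewrite (frac_lt _ _ _ _ H Pq')]; rewrite <- !mult_INR; apply lt_INR; lia. }
  assert (RF1 : INR p' * INR q = 1 + INR p * INR q').
  { apply (f_equal INR) in F1. rewrite mult_INR, plus_INR, mult_INR in F1. exact F1. }
  assert (RF2 : INR Q + 1 <= INR q + INR q').
  { rewrite <- plus_INR. replace (INR Q + 1) with (INR (S Q)) by (rewrite S_INR; ring). apply le_INR. lia. }
  assert (HQ2 : (2 <= Q)%nat) by nia.
  assert (Heps2 : eps <= 1/2).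
  { assert (2 <= INR Q) by (apply (le_INR 2); lia). nra. }
  set (x := INR q * alpha - INR p).
  set (y := INR p' - INR q' * alpha).
  assert (Hx : 0 < x). { rewrite (div_lt_l _ _ _ Pq) in Hlo; unfold x; lra. }
  assert (Hy : 0 < y). { rewrite (div_lt_r _ _ _ Pq') in Hhi; unfold y; lra. }
  assert (Hxy : INR q' * x + INR q * y = 1) by (unfold x, y; nra).
  assert (Hdich : forall a b : Z, (1 <= b <= Z.of_nat Q)%Z ->
     eps < Rabs (IZR b * alpha - IZR a) \/
     ((Z.of_nat q <= b)%Z /\ x <= Rabs (IZR b * alpha - IZR a)) \/
     ((Z.of_nat q' <= b)%Z /\ y <= Rabs (IZR b * alpha - IZR a))).
  { intros a b Hb.
    assert (Fz : (Z.of_nat p' * Z.of_nat q = 1 + Z.of_nat p * Z.of_nat q')%Z) by lia.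
    assert (Id : (Z.of_nat q * (b * Z.of_nat p' - a * Z.of_nat q') +
                  Z.of_nat q' * (a * Z.of_nat q - b * Z.of_nat p) = b)%Z).
    { transitivity (b * (Z.of_nat p' * Z.of_nat q - Z.of_nat p * Z.of_nat q'))%Z. ring.
      rewrite Fz. ring. }
    assert (D : (a * Z.of_nat q <= b * Z.of_nat p \/ b * Z.of_nat p' <= a * Z.of_nat q')%Z).
    { destruct (Z_le_gt_dec (a * Z.of_nat q) (b * Z.of_nat p)); [now left|].
      destruct (Z_le_gt_dec (b * Z.of_nat p') (a * Z.of_nat q')); [now right|].
      exfalso. nia. }
    assert (RB : 1 <= IZR b) by (apply IZR_le; lia).
    destruct D as [D|D]; apply Z.le_lteq in D; destruct D as [D|D].
    - left. assert (D' : (a * Z.of_nat q <= b * Z.of_nat p - 1)%Z) by lia.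
      apply IZR_le in D'. rewrite minus_IZR, !mult_IZR, <- !INR_IZR_INZ in D'.
      eapply Rlt_le_trans; [|apply Rle_abs].
      assert (IZR b * x > 0) by nra. unfold x in *. nra.
    - right; left.
      assert (Hb2 : (Z.of_nat q <= b)%Z) by (apply (div_le a b p q); lia).
      split; auto. apply IZR_le in Hb2. rewrite <- INR_IZR_INZ in Hb2.
      apply (f_equal IZR) in D. rewrite !mult_IZR, <- !INR_IZR_INZ in D.
      eapply Rle_trans; [|apply Rle_abs]. unfold x in *. nra.
    - left. assert (D' : (b * Z.of_nat p' <= a * Z.of_nat q' - 1)%Z) by lia.
      apply IZR_le in D'. rewrite minus_IZR, !mult_IZR, <- !INR_IZR_INZ in D'.
      rewrite <- Rabs_Ropp. eapply Rlt_le_trans; [|apply Rle_abs].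
      assert (IZR b * y > 0) by nra. unfold y in *. nra.
    - right; right.
      assert (Hb2 : (Z.of_nat q' <= b)%Z) by (apply (div_le a b p' q'); lia).
      split; auto. apply IZR_le in Hb2. rewrite <- INR_IZR_INZ in Hb2.
      apply (f_equal IZR) in D. rewrite !mult_IZR, <- !INR_IZR_INZ in D.
      rewrite <- Rabs_Ropp. eapply Rle_trans; [|apply Rle_abs]. unfold y in *. nra. }
  assert (Hqq : q <> q').
  { intro e. subst q'. assert (p < p')%nat by nia.
    assert (p' * q >= p * q + q)%nat by nia. lia. }
  assert (KQ : forall b : Z, (b < Z.of_nat q \/ b < Z.of_nat q')%Z -> (b <= Z.of_nat Q)%Z) by lia.
  assert (Ex : Rabs (IZR (Z.of_nat q) * alpha - IZR (Z.of_nat p)) = x).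
  { rewrite <- !INR_IZR_INZ. apply Rabs_right. lra. }
  assert (Ey : Rabs (IZR (Z.of_nat q') * alpha - IZR (Z.of_nat p')) = y).
  { rewrite <- !INR_IZR_INZ. rewrite Rabs_minus_sym. apply Rabs_right. unfold y in *. lra. }
  split; [|split].
  - intros Hc. rewrite (div_lt_r _ _ _ Pq') in Hc.
    assert (Hye : eps < y) by (unfold y; lra).
    destruct (key alpha eps (Z.of_nat q) (Z.of_nat p) Hal Hirr ltac:(lra) ltac:(lia))
      as [n [Hn [Hqn Hdn]]].
    + rewrite Ex. nra.
    + intros b a Hb. destruct (Hdich a b ltac:(lia)) as [h|[h|h]]; [auto|lia|lra].
    + exists n. split; auto. split. rewrite Hqn, <- INR_IZR_INZ; auto. rewrite Hdn, Ex. reflexivity.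
  - intros [Hc1 Hc2]. rewrite (div_le_l _ _ _ Pq') in Hc1. rewrite (div_le_r _ _ _ Pq) in Hc2.
    assert (Hye : y <= eps) by (unfold y; lra).
    assert (Hxe : x <= eps) by (unfold x; lra).
    destruct (le_lt_dec q q') as [hq|hq].
    + destruct (key alpha eps (Z.of_nat q) (Z.of_nat p) Hal Hirr ltac:(lra) ltac:(lia))
        as [n [Hn [Hqn Hdn]]].
      * rewrite Ex. lra.
      * intros b a Hb. destruct (Hdich a b ltac:(lia)) as [h|[h|h]]; [auto|lia|lia].
      * exists n. split; auto. split. rewrite Hqn, <- INR_IZR_INZ, Nat.min_l; auto.
        split; intros; [|lia]. rewrite Hdn, Ex. reflexivity.
    + destruct (key alpha eps (Z.of_nat q') (Z.of_nat p') Hal Hirr ltac:(lra) ltac:(lia))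
        as [n [Hn [Hqn Hdn]]].
      * rewrite Ey. lra.
      * intros b a Hb. destruct (Hdich a b ltac:(lia)) as [h|[h|h]]; [auto|lia|lia].
      * exists n. split; auto. split. rewrite Hqn, <- INR_IZR_INZ, Nat.min_r; auto; lia.
        split; intros; [lia|]. rewrite Hdn, Ey. reflexivity.
  - intros Hc. rewrite (div_lt_l _ _ _ Pq) in Hc.
    assert (Hxe : eps < x) by (unfold x; lra).
    destruct (key alpha eps (Z.of_nat q') (Z.of_nat p') Hal Hirr ltac:(lra) ltac:(lia))
      as [n [Hn [Hqn Hdn]]].
    + rewrite Ey. nra.
    + intros b a Hb. destruct (Hdich a b ltac:(lia)) as [h|[h|h]]; [auto|lra|lia].
    + exists n. split; auto. split. rewrite Hqn, <- INR_IZR_INZ; auto. rewrite Hdn, Ey. reflexivity.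
Qed.
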